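(* Assume (P0), (P1), (P3), (P4) and (P5). Let $(\alpha,0,\beta)\in\partial\mathcal D$, $\mu\in[0,1]$ and $s\in(r,R)$. Then the problem $$\beta\dot u=A(\alpha)u+\mu f(\alpha,u),\qquad u(0)=u(2\pi),$$ has no $C^1$ solution $u$ with symmetry at least $H^\varphi$ and $\|u\|_C=s$. Equivalently, let $\mathfrak W=C^{H^\varphi}$, let $\Omega=\mathcal D\times B_R(0)$ with $B_R(0)=\{u\in\mathfrak W:\|u\|_C<R\}$, and let $F(\alpha,u)(t)=f(\alpha,u(t))$. Then for every such $\mu$ and $s$, the equation $\big(\|u\|_C-s,\ u-\mu(\beta L-A(\alpha))^{-1}F(\alpha,u)\big)=0$ has no solution on $\partial\Omega$.
   Context: Let $\Gamma$ be a finite group and $V=\mathbb R^N$ an orthogonal $\Gamma$-representation with norm $|\cdot|$. Let $\alpha_-<\alpha_+$. Let $A:[\alpha_-,\alpha_+]\to L^\Gamma(V;V)$ be a curve of $\Gamma$-equivariant linear maps, and $f:[\alpha_-,\alpha_+]\times V\to V$ a map with $f(\alpha,gx)=gf(\alpha,x)$ for all $g\in\Gamma$. Let $C=C(S^1;V)$ be the space of continuous $2\pi$-periodic $V$-valued functions with sup norm $\|\cdot\|_C$. Let $L=d/dt$. Twisted subgroup: $H\le\Gamma$ and $\varphi:H\to\mathbb R/\mathbb Z$ is a homomorphism. A $2\pi$-periodic $u$ has symmetry at least $H^\varphi$ if $h\,u(t-2\pi\varphi(h))=u(t)$ for all $h\in H$ and all $t$. $C^{H^\varphi}$ denotes the subspace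 of such functions. Let $V^H$ be the $H$-fixed subspace. For $l\ge1$ put ${}^l\widetilde V^{H^\varphi}=\{v\in\mathbb C^N:e^{-2\pi il\varphi(h)}hv=v\ \forall h\in H\}$, with $\Gamma$ acting complex-linearly on $\mathbb C^N$. For $l\ge1$, $\Delta_l^{H^\varphi}(\alpha,\tau,\beta)$ is the restriction of $l(\tau+i\beta)\mathrm{Id}-A(\alpha)$ to ${}^l\widetilde V^{H^\varphi}$, and $\Lambda_l^{H^\varphi}=\det_{\mathbb C}\Delta_l^{H^\varphi}$. Also $\Delta_0^{H^\varphi}=-A(\alpha)|_{V^H}$ and $\Lambda_0^{H^\varphi}(\alpha,\tau,\beta)=\det_{\mathbb R}(A(\alpha)|_{V^H})$. Put $M^{H^\varphi}(\alpha,\beta)=\big(\sum_{l\ge0}|(\Delta_l^{H^\varphi}(\alpha,0,\beta))^{-1}|^2\big)^{1/2}$, where $|\cdot|$ is the induced operator norm. Conditions: (P0) $A$ and $f$ are continuous. (P1) $\Lambda_0^{H^\varphi}(\alpha,0,0)\ne0$ for all $\alpha$. (P3) $\mathcal D$ is an open subset of the plane $[\alpha_-,\alpha_+]\times\{0\}\times[0,\infty)$ (coordinates $(\alpha,\tau,\beta)$), with $\overline{\mathcal D}$ homeomorphic to a closed disk, and $\Lambda_l^{H^\varphi}(\alpha,0,\beta)\ne0$ for all $l\in\mathbb N$ and all $(\alpha,0,\beta)\in\partial\mathcal D$ (boundary relative to the plane). $\mathcal D$ is identified with a subset of the $(\alpha,\beta)$-plane, and $\overline{\mathcal D}\subset\{\beta>0\}$.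 (The paper's (P3) also contains condition (ii): $(\Lambda_1^{H^\varphi})^{-1}(0)\cap\overline{\mathcal D}=(\Lambda_1^{H^\varphi})^{-1}(0)\cap\mathcal P_0$, which refers to the set $\mathcal P$ of (P2); it is not used in this lemma.) (P4) There are $N:[\alpha_-,\alpha_+]\to[0,\infty)$ and $0\le r<R$ with $|f(\alpha,x)|\le N(\alpha)\max\{r,|x|\}$ for all $|x|\le R$. (P5) $N(\alpha)<1/(\sqrt{2\pi}M^{H^\varphi}(\alpha,\beta))$ for all $(\alpha,0,\beta)\in\partial\mathcal D$. Under (P1) and (P3)(iii), $\beta L-A(\alpha):(C^1)^{H^\varphi}\to C^{H^\varphi}$ is invertible for $(\alpha,\beta)\in\partial\mathcal D$. *)

(* Defs.v *)
From Stdlib Require Import Reals.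
From mathcomp Require Import all_boot all_fingroup.
Set Implicit Arguments. Unset Strict Implicit. Unset Printing Implicit Defensive.
Local Open Scope R_scope.

Definition vec (N : nat) := 'I_N -> R.
Definition mat (N : nat) := 'I_N -> 'I_N -> R.

Definition sumI (N : nat) (F : 'I_N -> R) : R := foldr Rplus 0 (map F (enum 'I_N)).

Definition mv (N : nat) (M : mat N) (v : vec N) : vec N :=
  fun i => sumI (fun j => M i j * v j).
Definition mm (N : nat) (M1 M2 : mat N) : mat N :=
  fun i k => sumI (fun j => M1 i j * M2 j k).
Definition idm (N : nat) : mat N := fun i j => if i == j then 1 else 0.
Definition trm (N : nat) (M : mat N) : mat N := fun i j => M j i.

Definition vsub (N : nat) (u v : vec N) : vec N := fun i => u i - v i.
Definition vnorm (N : nat) (v : vec N) : R := sqrt (sumI (fun i => v i ^ 2)).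

Definition orth_rep (gT : finGroupType) (N : nat) (rho : gT -> mat N) : Prop :=
  rho 1%g = @idm N /\
  (forall g h : gT, rho (g * h)%g = mm (rho g) (rho h)) /\
  (forall g : gT, mm (trm (rho g)) (rho g) = @idm N).

(* phi : H -> R/Z homomorphism, represented by real representatives *)
Definition twist_hom (gT : finGroupType) (H : {group gT}) (phi : gT -> R) : Prop :=
  forall g h : gT, g \in H -> h \in H ->
    exists k : Z, phi (g * h)%g = phi g + phi h + IZR k.

Definition fixH (gT : finGroupType) (N : nat) (rho : gT -> mat N) (H : {group gT})
  (v : vec N) : Prop :=
  forall h : gT, h \in H -> forall i, mv (rho h) v i = v i.

(* ---------- complexification C^N, vectors as pairs (x, y) = x + i y ---------- *)
Definition cvec (N : nat) := (vec N * vec N)%type.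
Definition cnorm (N : nat) (v : cvec N) : R :=
  sqrt (sumI (fun i => (fst v) i ^ 2 + (snd v) i ^ 2)).

(* ^l V~^{H^phi} = { v in C^N : e^{-2 pi i l phi(h)} h v = v  for all h in H } *)
Definition twisted_space (gT : finGroupType) (N : nat) (rho : gT -> mat N)
  (H : {group gT}) (phi : gT -> R) (l : nat) (v : cvec N) : Prop :=
  forall h : gT, h \in H ->
    let th := 2 * PI * INR l * phi h in
    let hx := mv (rho h) (fst v) in
    let hy := mv (rho h) (snd v) in
    forall i, cos th * hx i + sin th * hy i = (fst v) i /\
              cos th * hy i - sin th * hx i = (snd v) i.

(* Delta_l(alpha,0,beta) v = l (i beta) v - A(alpha) v  on C^N *)
Definition Delta_c (N : nat) (Aa : mat N) (l : nat) (beta : R) (v : cvec N) : cvec N :=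
  (fun i => - (INR l * beta) * (snd v) i - mv Aa (fst v) i,
   fun i => (INR l * beta) * (fst v) i - mv Aa (snd v) i).

(* "K = |T^{-1}|": the operator norm of the inverse of T restricted to W,
   i.e. the least K >= 0 with |v| <= K |T v| for all v in W. *)
Definition inv_opnorm (X : Type) (nrm : X -> R) (W : X -> Prop) (T : X -> X) (K : R)
  : Prop :=
  0 <= K /\
  (forall v, W v -> nrm v <= K * nrm (T v)) /\
  (forall K', 0 <= K' -> (forall v, W v -> nrm v <= K' * nrm (T v)) -> K <= K').

(* Lambda_0 = det_R (A(alpha)|_{V^H}) <> 0 *)
Definition Lambda0_nonzero (gT : finGroupType) (N : nat) (rho : gT -> mat N)
  (H : {group gT}) (Aa : mat N) : Prop :=
  forall v : vec N, fixH rho H v -> (forall i, mv Aa v i = 0) -> forall i, v i = 0.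

(* Lambda_l(alpha,0,beta) = det_C (Delta_l(alpha,0,beta)|_{^l V~^{H^phi}}) <> 0, l >= 1 *)
Definition Lambda_nonzero (gT : finGroupType) (N : nat) (rho : gT -> mat N)
  (H : {group gT}) (phi : gT -> R) (Aa : mat N) (l : nat) (beta : R) : Prop :=
  forall v : cvec N, twisted_space rho H phi l v ->
    (forall i, fst (Delta_c Aa l beta v) i = 0 /\ snd (Delta_c Aa l beta v) i = 0) ->
    forall i, fst v i = 0 /\ snd v i = 0.

Definition dist2 (p q : R * R) : R := (fst p - fst q) ^ 2 + (snd p - snd q) ^ 2.

Definition closure2 (D : R -> R -> Prop) (a b : R) : Prop :=
  forall eps, 0 < eps -> exists a' b', D a' b' /\ dist2 (a, b) (a', b') < eps ^ 2.

(* boundary relative to the (closed) plane P = [am,ap] x [0,oo): for D relatively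
   open in P it is closure(D) \ D *)
Definition boundary2 (D : R -> R -> Prop) (a b : R) : Prop :=
  closure2 D a b /\ ~ D a b.

Definition cont_on2 (S : R * R -> Prop) (F : R * R -> R * R) : Prop :=
  forall p, S p -> forall eps, 0 < eps -> exists delta, 0 < delta /\
    forall q, S q -> dist2 p q < delta ^ 2 -> dist2 (F p) (F q) < eps ^ 2.

Definition homeomorphic2 (S T : R * R -> Prop) : Prop :=
  exists (F G : R * R -> R * R),
    (forall p, S p -> T (F p)) /\ (forall q, T q -> S (G q)) /\
    (forall p, S p -> G (F p) = p) /\ (forall q, T q -> F (G q) = q) /\
    cont_on2 S F /\ cont_on2 T G.

Definition closed_disk (p : R * R) : Prop := fst p ^ 2 + snd p ^ 2 <= 1.

(* Main.v *)
Require Import Defs.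
From Stdlib Require Import Reals Lra Lia Arith List.
From Coquelicot Require Import Coquelicot.
Local Open Scope R_scope.

Definition cont (f : R -> R) := forall x, continuous f x.

Lemma cont_plus f g : cont f -> cont g -> cont (fun x => f x + g x).
Proof. intros Hf Hg x. exact (continuous_plus f g x (Hf x) (Hg x)). Qed.
Lemma cont_mult f g : cont f -> cont g -> cont (fun x => f x * g x).
Proof. intros Hf Hg x. exact (continuous_mult f g x (Hf x) (Hg x)). Qed.
Lemma cont_const c : cont (fun _ => c).
Proof. intros x. apply continuous_const. Qed.
Lemma cont_id : cont (fun x => x).
Proof. intros x. apply continuous_id. Qed.
Lemma cont_comp f g : cont f -> cont g -> cont (fun x => g (f x)).
Proof. intros Hf Hg x. exact (continuous_comp f g x (Hf x) (Hg (f x))). Qed.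
Lemma cont_ext f g : (forall x, f x = g x) -> cont f -> cont g.
Proof. intros E Hf x. apply (continuous_ext f g x E (Hf x)). Qed.
Lemma cont_cos : cont cos.
Proof. intros x. apply continuous_cos. Qed.
Lemma cont_sin : cont sin.
Proof. intros x. apply continuous_sin. Qed.
Lemma cont_scal c f : cont f -> cont (fun x => c * f x).
Proof. intros Hf. apply cont_mult; [apply cont_const | exact Hf]. Qed.
Lemma cont_opp f : cont f -> cont (fun x => - f x).
Proof. intros Hf. apply (cont_ext (fun x => (-1) * f x)). intros; ring. apply cont_scal; auto. Qed.
Lemma cont_minus f g : cont f -> cont g -> cont (fun x => f x - g x).
Proof. intros Hf Hg. apply cont_plus; auto. apply cont_opp; auto. Qed.
Lemma cont_cosl (k : R) : cont (fun t => cos (k * t)).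
Proof. apply (cont_comp (fun t => k * t) cos). apply cont_scal, cont_id. apply cont_cos. Qed.
Lemma cont_sinl (k : R) : cont (fun t => sin (k * t)).
Proof. apply (cont_comp (fun t => k * t) sin). apply cont_scal, cont_id. apply cont_sin. Qed.
Lemma cont_abs f : cont f -> cont (fun x => Rabs (f x)).
Proof. intros Hf. apply (cont_comp f Rabs); auto. intros x; apply continuous_Rabs. Qed.
Lemma cont_pow f n : cont f -> cont (fun x => f x ^ n).
Proof. intros Hf. induction n; simpl. apply cont_const. apply cont_mult; auto. Qed.
Lemma cont_shift f v : cont f -> cont (fun x => f (x + v)).
Proof. intros Hf. apply (cont_comp (fun x => x + v) f); auto. apply cont_plus. apply cont_id. apply cont_const. Qed.

Definition RI (f : R -> R) (a b : R) : R := @RInt R_CompleteNormedModule f a b.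

Lemma exRI f a b : cont f -> ex_RInt f a b.
Proof. intros Hf. apply (@ex_RInt_continuous R_CompleteNormedModule). intros; apply Hf. Qed.

Lemma RI_ext f g a b : (forall x, f x = g x) -> RI f a b = RI g a b.
Proof. intros E. apply RInt_ext. intros; apply E. Qed.
Lemma RI_plus f g a b : cont f -> cont g -> RI (fun x => f x + g x) a b = RI f a b + RI g a b.
Proof. intros Hf Hg. exact (@RInt_plus R_CompleteNormedModule f g a b (exRI f a b Hf) (exRI g a b Hg)). Qed.
Lemma RI_minus f g a b : cont f -> cont g -> RI (fun x => f x - g x) a b = RI f a b - RI g a b.
Proof. intros Hf Hg. exact (@RInt_minus R_CompleteNormedModule f g a b (exRI f a b Hf) (exRI g a b Hg)). Qed.
Lemma RI_scal f c a b : cont f -> RI (fun x => c * f x) a b = c * RI f a b.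
Proof. intros Hf. exact (@RInt_scal R_CompleteNormedModule f a b c (exRI f a b Hf)). Qed.
Lemma RI_opp f a b : cont f -> RI (fun x => - f x) a b = - RI f a b.
Proof. intros Hf. exact (@RInt_opp R_CompleteNormedModule f a b (exRI f a b Hf)). Qed.
Lemma RI_chasles f a b c : cont f -> RI f a b + RI f b c = RI f a c.
Proof. intros Hf. exact (@RInt_Chasles R_CompleteNormedModule f a b c (exRI f a b Hf) (exRI f b c Hf)). Qed.
Lemma RI_point f a : RI f a a = 0.
Proof. exact (@RInt_point R_CompleteNormedModule a f). Qed.
Lemma RI_swap f a b : cont f -> RI f b a = - RI f a b.
Proof. intros Hf. unfold RI. rewrite <- (@opp_RInt_swap R_CompleteNormedModule f a b (exRI f a b Hf)). reflexivity. Qed.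
Lemma RI_const c a b : RI (fun _ => c) a b = c * (b - a).
Proof. unfold RI. rewrite (@RInt_const R_CompleteNormedModule). unfold scal; simpl; unfold mult; simpl. ring. Qed.
Lemma RI_shift f v a b : cont f -> RI (fun y => f (y + v)) a b = RI f (a + v) (b + v).
Proof.
  unfold RI.   intros Hf. rewrite <- (Rmult_1_l a) at 2. rewrite <- (Rmult_1_l b) at 2.
  rewrite <- (@RInt_comp_lin R_CompleteNormedModule f 1 v a b). apply RI_ext. intros x.
  unfold scal; simpl; unfold mult; simpl. rewrite Rmult_1_l, Rmult_1_l. reflexivity.
  apply exRI; auto.
Qed.
Lemma RI_le f g a b : a <= b -> cont f -> cont g -> (forall x, a <= x <= b -> f x <= g x) ->
  RI f a b <= RI g a b.
Proof. intros Hab Hf Hg Hle. apply RInt_le; auto; try apply exRI; auto. intros; apply Hle; lra. Qed.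
Lemma RI_abs f a b : a <= b -> cont f -> Rabs (RI f a b) <= RI (fun t => Rabs (f t)) a b.
Proof. intros Hab Hf. apply abs_RInt_le; auto. apply exRI; auto. Qed.
Lemma RI_ftc F f a b : (forall x, is_derive F x (f x)) -> cont f -> RI f a b = F b - F a.
Proof. intros HF Hf. apply is_RInt_unique. apply (@is_RInt_derive R_CompleteNormedModule F f a b); intros; auto. Qed.
Lemma RI_ge0 f a b : a <= b -> cont f -> (forall x, a <= x <= b -> 0 <= f x) -> 0 <= RI f a b.
Proof. intros Hab Hf H. replace 0 with (RI (fun _ => 0) a b) at 1 by (rewrite RI_const; ring).
  apply RI_le; auto. apply cont_const. Qed.

Lemma RI_period f c : cont f -> (forall t, f (t + 2*PI) = f t) ->
  RI f c (c + 2*PI) = RI f 0 (2*PI).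
Proof.
  intros Hf Hp.
  rewrite <- (RI_chasles f c 0 (c + 2*PI)) by auto.
  rewrite <- (RI_chasles f 0 (2*PI) (c + 2*PI)) by auto.
  replace (RI f (2*PI) (c + 2*PI)) with (RI f 0 c).
  rewrite (RI_swap f 0 c) by auto. ring.
  replace (2*PI) with (0 + 2*PI) at 1 by ring.
  rewrite <- RI_shift by auto. apply RI_ext. intros; rewrite Hp; auto.
Qed.

Lemma RI_lin2 f g al be a b : cont f -> cont g ->
  RI (fun t => al * f t + be * g t) a b = al * RI f a b + be * RI g a b.
Proof. intros Hf Hg. rewrite RI_plus. rewrite !RI_scal; auto. apply cont_scal; auto. apply cont_scal; auto. Qed.

Lemma der_mult f g f' g' t : is_derive f t f' -> is_derive g t g' ->
  is_derive (fun t => f t * g t) t (f' * g t + f t * g').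
Proof. intros H1 H2. exact (is_derive_mult f g t f' g' H1 H2 Rmult_comm). Qed.

Lemma der_cosl l t : is_derive (fun t => cos (l*t)) t (- l * sin (l*t)).
Proof. auto_derive. trivial. ring. Qed.
Lemma der_sinl l t : is_derive (fun t => sin (l*t)) t (l * cos (l*t)).
Proof. auto_derive. trivial. ring. Qed.

Lemma sin_2PIk k : sin (INR k * (2*PI)) = 0.
Proof. replace (INR k * (2*PI)) with (0 + 2 * INR k * PI) by ring. rewrite sin_period. apply sin_0. Qed.
Lemma cos_2PIk k : cos (INR k * (2*PI)) = 1.
Proof. replace (INR k * (2*PI)) with (0 + 2 * INR k * PI) by ring. rewrite cos_period. apply cos_0. Qed.

Lemma PI2_pos : 0 < 2 * PI.
Proof. pose proof PI_RGT_0. lra. Qed.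

Lemma int_cos k : (1 <= k)%nat -> RI (fun t => cos (INR k * t)) 0 (2*PI) = 0.
Proof.
  intros Hk. assert (Hk' : INR k <> 0). { apply not_0_INR. lia. }
  rewrite (RI_ftc (fun t => / INR k * sin (INR k * t))).
  rewrite sin_2PIk. rewrite Rmult_0_r, Rmult_0_r, sin_0. ring.
  intros x. eapply is_derive_ext. intros; reflexivity.
  replace (cos (INR k * x)) with (/ INR k * (INR k * cos (INR k * x))) by (field; auto).
  apply (is_derive_scal (fun t => sin (INR k * t))). apply der_sinl.
  apply cont_cosl.
Qed.

Lemma int_sin k : RI (fun t => sin (INR k * t)) 0 (2*PI) = 0.
Proof.
  destruct k as [|k].
  - rewrite (RI_ext _ (fun _ => 0)). rewrite RI_const; ring. intros; simpl. rewrite Rmult_0_l. apply sin_0.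
  - assert (Hk' : INR (S k) <> 0). { apply not_0_INR. lia. }
    rewrite (RI_ftc (fun t => - / INR (S k) * cos (INR (S k) * t))).
    rewrite cos_2PIk. rewrite Rmult_0_r, cos_0. ring.
    intros x. replace (sin (INR (S k) * x)) with (- / INR (S k) * (- INR (S k) * sin (INR (S k) * x))) by (field; auto).
    apply (is_derive_scal (fun t => cos (INR (S k) * t))). apply der_cosl.
    apply cont_sinl.
Qed.

Lemma int_cos_diff j m : RI (fun t => cos ((INR j - INR m) * t)) 0 (2*PI) =
  if Nat.eqb j m then 2*PI else 0.
Proof.
  destruct (lt_eq_lt_dec j m) as [[Hlt|Heq]|Hgt].
  - assert (E: Nat.eqb j m = false) by (apply Nat.eqb_neq; lia). rewrite E.
    rewrite (RI_ext _ (fun t => cos (INR (m - j) * t))). apply int_cos; lia.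
    intros t. rewrite minus_INR by lia. rewrite <- cos_neg. f_equal; ring.
  - subst. rewrite Nat.eqb_refl. rewrite (RI_ext _ (fun _ => 1)). rewrite RI_const; ring.
    intros t. replace ((INR m - INR m) * t) with 0 by ring. apply cos_0.
  - assert (E: Nat.eqb j m = false) by (apply Nat.eqb_neq; lia). rewrite E.
    rewrite (RI_ext _ (fun t => cos (INR (j - m) * t))). apply int_cos; lia.
    intros t. rewrite minus_INR by lia. reflexivity.
Qed.

Lemma int_sin_diff j m : RI (fun t => sin ((INR j - INR m) * t)) 0 (2*PI) = 0.
Proof.
  destruct (le_lt_dec m j) as [Hle|Hgt].
  - rewrite (RI_ext _ (fun t => sin (INR (j - m) * t))). apply int_sin.
    intros t. rewrite minus_INR by lia. reflexivity.
  - rewrite (RI_ext _ (fun t => - sin (INR (m - j) * t))). rewrite RI_opp. rewrite int_sin; ring.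
    apply cont_sinl.
    intros t. rewrite minus_INR by lia. rewrite <- sin_neg. f_equal; ring.
Qed.

Lemma int_cos_sum j m : RI (fun t => cos ((INR j + INR m) * t)) 0 (2*PI) =
  if Nat.eqb (j + m) 0 then 2*PI else 0.
Proof. rewrite <- (int_cos_diff (j+m) 0). apply RI_ext. intros t. rewrite plus_INR. simpl. f_equal; ring. Qed.
Lemma int_sin_sum j m : RI (fun t => sin ((INR j + INR m) * t)) 0 (2*PI) = 0.
Proof. transitivity (RI (fun t => sin ((INR (j+m) - INR 0) * t)) 0 (2*PI)); [|apply int_sin_diff]. apply RI_ext. intros t. rewrite plus_INR. simpl. f_equal; ring. Qed.

Definition Cc (l : nat) (p : R -> R) : R := / (2*PI) * RI (fun t => p t * cos (INR l * t)) 0 (2*PI).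
Definition Sc (l : nat) (p : R -> R) : R := / (2*PI) * RI (fun t => p t * sin (INR l * t)) 0 (2*PI).

Lemma cont_cosd j m : cont (fun t => cos ((INR j - INR m) * t)).
Proof. apply cont_cosl. Qed.
Lemma cont_sind j m : cont (fun t => sin ((INR j - INR m) * t)).
Proof. apply cont_sinl. Qed.
Lemma cont_coss j m : cont (fun t => cos ((INR j + INR m) * t)).
Proof. apply cont_cosl. Qed.
Lemma cont_sins j m : cont (fun t => sin ((INR j + INR m) * t)).
Proof. apply cont_sinl. Qed.

Lemma Cc_cos j m : Cc j (fun t => cos (INR m * t)) =
  if Nat.eqb j m then (if Nat.eqb j 0 then 1 else /2) else 0.
Proof.
  unfold Cc. rewrite (RI_ext _ (fun t => /2 * cos ((INR m - INR j) * t) + /2 * cos ((INR m + INR j) * t))).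
  rewrite RI_lin2 by (apply cont_cosl). rewrite int_cos_diff, int_cos_sum.
  pose proof PI2_pos.
  rewrite (Nat.eqb_sym m j).
  destruct (Nat.eqb j m) eqn:E.
  - apply Nat.eqb_eq in E; subst. destruct (Nat.eqb m 0) eqn:E2.
    + apply Nat.eqb_eq in E2; subst. simpl. field. lra.
    + assert (Nat.eqb (m+m) 0 = false) by (apply Nat.eqb_neq; apply Nat.eqb_neq in E2; lia).
      rewrite H0. field. lra.
  - assert (Nat.eqb (m+j) 0 = false) by (apply Nat.eqb_neq; apply Nat.eqb_neq in E; lia).
    rewrite H0. field. lra.
  - intros t. rewrite Rmult_minus_distr_r, Rmult_plus_distr_r. rewrite cos_minus, cos_plus. field.
Qed.

Lemma Sc_cos j m : Sc j (fun t => cos (INR m * t)) = 0.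
Proof.
  unfold Sc. rewrite (RI_ext _ (fun t => /2 * sin ((INR m + INR j) * t) + (-/2) * sin ((INR m - INR j) * t))).
  rewrite RI_lin2 by (apply cont_sinl). rewrite int_sin_diff, int_sin_sum. ring.
  intros t. rewrite Rmult_minus_distr_r, Rmult_plus_distr_r. rewrite sin_minus, sin_plus. field.
Qed.

Lemma Cc_sin j m : Cc j (fun t => sin (INR m * t)) = 0.
Proof.
  unfold Cc. rewrite (RI_ext _ (fun t => /2 * sin ((INR m + INR j) * t) + (/2) * sin ((INR m - INR j) * t))).
  rewrite RI_lin2 by (apply cont_sinl). rewrite int_sin_diff, int_sin_sum. ring.
  intros t. rewrite Rmult_minus_distr_r, Rmult_plus_distr_r. rewrite sin_minus, sin_plus. field.
Qed.

Lemma Sc_sin j m : Sc j (fun t => sin (INR m * t)) =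
  if Nat.eqb j m then (if Nat.eqb j 0 then 0 else /2) else 0.
Proof.
  unfold Sc. rewrite (RI_ext _ (fun t => /2 * cos ((INR m - INR j) * t) + (-/2) * cos ((INR m + INR j) * t))).
  rewrite RI_lin2 by (apply cont_cosl). rewrite int_cos_diff, int_cos_sum.
  pose proof PI2_pos.
  rewrite (Nat.eqb_sym m j).
  destruct (Nat.eqb j m) eqn:E.
  - apply Nat.eqb_eq in E; subst. destruct (Nat.eqb m 0) eqn:E2.
    + apply Nat.eqb_eq in E2; subst. simpl. field. lra.
    + assert (Nat.eqb (m+m) 0 = false) by (apply Nat.eqb_neq; apply Nat.eqb_neq in E2; lia).
      rewrite H0. field. lra.
  - assert (Nat.eqb (m+j) 0 = false) by (apply Nat.eqb_neq; apply Nat.eqb_neq in E; lia).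
    rewrite H0. field. lra.
  - intros t. rewrite Rmult_minus_distr_r, Rmult_plus_distr_r. rewrite cos_minus, cos_plus. field.
Qed.

Lemma deriv_coef (p p' : R -> R) l : (forall t, is_derive p t (p' t)) -> cont p' ->
  (forall t, p (t + 2*PI) = p t) ->
  Cc l p' = INR l * Sc l p /\ Sc l p' = - INR l * Cc l p.
Proof.
  intros Hd Hc Hp.
  assert (Hcp : cont p). { intros x. apply (@ex_derive_continuous R_AbsRing R_NormedModule). exists (p' x). apply Hd. }
  assert (P0 : p (2*PI) = p 0). { replace (2*PI) with (0 + 2*PI) by ring. apply Hp. }
  split.
  - assert (E : RI (fun t => p' t * cos (INR l * t) + p t * (- INR l * sin (INR l * t))) 0 (2*PI) = 0).
    { rewrite (RI_ftc (fun t => p t * cos (INR l * t))). rewrite cos_2PIk, Rmult_0_r, cos_0, P0. ring.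
      intros x. apply (der_mult p (fun t => cos (INR l * t))). apply Hd. apply (der_cosl (INR l)).
      apply cont_plus. apply cont_mult; auto. apply cont_cosl. apply cont_mult; auto. apply cont_scal, cont_sinl. }
    rewrite RI_plus in E. unfold Cc, Sc.
    rewrite (RI_ext (fun t => p t * (- INR l * sin (INR l * t))) (fun t => (- INR l) * (p t * sin (INR l * t)))) in E.
    rewrite RI_scal in E.
    replace (RI (fun t => p' t * cos (INR l * t)) 0 (2*PI)) with (INR l * RI (fun t => p t * sin (INR l * t)) 0 (2*PI)) by lra. ring.
    apply cont_mult; auto. apply cont_sinl. intros; ring.
    apply cont_mult; auto. apply cont_cosl. apply cont_mult; auto. apply cont_scal, cont_sinl.
  - assert (E : RI (fun t => p' t * sin (INR l * t) + p t * (INR l * cos (INR l * t))) 0 (2*PI) = 0).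
    { rewrite (RI_ftc (fun t => p t * sin (INR l * t))). rewrite sin_2PIk, !Rmult_0_r, sin_0. ring.
      intros x. apply (der_mult p (fun t => sin (INR l * t))). apply Hd. apply (der_sinl (INR l)).
      apply cont_plus. apply cont_mult; auto. apply cont_sinl. apply cont_mult; auto. apply cont_scal, cont_cosl. }
    rewrite RI_plus in E. unfold Cc, Sc.
    rewrite (RI_ext (fun t => p t * (INR l * cos (INR l * t))) (fun t => (INR l) * (p t * cos (INR l * t)))) in E.
    rewrite RI_scal in E.
    replace (RI (fun t => p' t * sin (INR l * t)) 0 (2*PI)) with (- INR l * RI (fun t => p t * cos (INR l * t)) 0 (2*PI)) by lra. ring.
    apply cont_mult; auto. apply cont_cosl. intros; ring.
    apply cont_mult; auto. apply cont_sinl. apply cont_mult; auto. apply cont_scal, cont_cosl.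
Qed.

Definition lsum {A : Type} (l : list A) (F : A -> R) : R := seq.foldr Rplus 0 (seq.map F l).

Lemma lsum_nil {A} (F : A -> R) : lsum nil F = 0.
Proof. reflexivity. Qed.
Lemma lsum_cons {A} (x : A) l F : lsum (x :: l) F = F x + lsum l F.
Proof. reflexivity. Qed.
Lemma lsum_ext {A} (l : list A) F G : (forall x, In x l -> F x = G x) -> lsum l F = lsum l G.
Proof. induction l; intros E; simpl; auto. rewrite !lsum_cons. rewrite E, IHl; auto. intros; apply E; simpl; auto. simpl; auto. Qed.
Lemma lsum_plus {A} (l : list A) F G : lsum l (fun x => F x + G x) = lsum l F + lsum l G.
Proof. induction l; simpl. rewrite !lsum_nil; ring. rewrite !lsum_cons, IHl; ring. Qed.
Lemma lsum_scal {A} (l : list A) c F : lsum l (fun x => c * F x) = c * lsum l F.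
Proof. induction l; simpl. rewrite !lsum_nil; ring. rewrite !lsum_cons, IHl; ring. Qed.
Lemma lsum_opp {A} (l : list A) F : lsum l (fun x => - F x) = - lsum l F.
Proof. induction l; simpl. rewrite !lsum_nil; ring. rewrite !lsum_cons, IHl; ring. Qed.
Lemma lsum_zero {A} (l : list A) : lsum l (fun _ => 0) = 0.
Proof. induction l; simpl. reflexivity. rewrite lsum_cons, IHl; ring. Qed.
Lemma lsum_le {A} (l : list A) F G : (forall x, In x l -> F x <= G x) -> lsum l F <= lsum l G.
Proof. induction l; intros E. rewrite !lsum_nil; lra. rewrite !lsum_cons.
  apply Rplus_le_compat. apply E; simpl; auto. apply IHl; intros; apply E; simpl; auto. Qed.
Lemma lsum_nonneg {A} (l : list A) F : (forall x, In x l -> 0 <= F x) -> 0 <= lsum l F.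
Proof. intros H. rewrite <- (lsum_zero l). apply lsum_le; auto. Qed.
Lemma lsum_abs {A} (l : list A) F : Rabs (lsum l F) <= lsum l (fun x => Rabs (F x)).
Proof. induction l. rewrite !lsum_nil, Rabs_R0; lra. rewrite !lsum_cons.
  eapply Rle_trans. apply Rabs_triang. lra. Qed.
Lemma lsum_swap {A B} (l1 : list A) (l2 : list B) (F : A -> B -> R) :
  lsum l1 (fun x => lsum l2 (fun y => F x y)) = lsum l2 (fun y => lsum l1 (fun x => F x y)).
Proof. induction l1; simpl. rewrite lsum_nil. symmetry. apply lsum_zero.
  rewrite lsum_cons, IHl1. rewrite <- lsum_plus. apply lsum_ext. intros; rewrite lsum_cons; reflexivity. Qed.

Lemma cont_lsum {A} (l : list A) (F : A -> R -> R) : (forall x, cont (F x)) -> cont (fun t => lsum l (fun x => F x t)).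
Proof. intros H. induction l. apply (cont_ext (fun _ => 0)). intros; reflexivity. apply cont_const. apply (cont_ext (fun t => F a t + lsum l (fun x => F x t))).
  intros; reflexivity. apply cont_plus; auto. Qed.
Lemma RI_lsum {A} (l : list A) (F : A -> R -> R) a b : (forall x, cont (F x)) ->
  RI (fun t => lsum l (fun x => F x t)) a b = lsum l (fun x => RI (F x) a b).
Proof. intros H. induction l. rewrite lsum_nil. rewrite (RI_ext _ (fun _ => 0)). rewrite RI_const; ring. intros; reflexivity.
  rewrite lsum_cons. rewrite <- IHl. rewrite <- RI_plus; auto. apply cont_lsum; auto. Qed.

Lemma lsum_CS2 {A} (l : list A) F G :
  (lsum l (fun x => F x * G x))^2 <= lsum l (fun x => F x ^ 2) * lsum l (fun x => G x ^ 2).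
Proof.
  set (a := lsum l (fun x => F x ^ 2)). set (b := lsum l (fun x => G x ^ 2)).
  set (c := lsum l (fun x => F x * G x)).
  assert (Q : forall lam, 0 <= a - 2 * lam * c + lam^2 * b).
  { intros lam. assert (0 <= lsum l (fun x => (F x - lam * G x)^2)) by (apply lsum_nonneg; intros; apply pow2_ge_0).
    replace (a - 2 * lam * c + lam^2 * b) with (lsum l (fun x => (F x - lam * G x)^2)). auto.
    unfold a, b, c. rewrite (lsum_ext _ _ (fun x => F x^2 + ((-2*lam) * (F x * G x) + lam^2 * G x^2))).
    rewrite lsum_plus, lsum_plus, lsum_scal, lsum_scal. ring.
    intros; ring. }
  assert (Ha : 0 <= a) by (apply lsum_nonneg; intros; apply pow2_ge_0).
  assert (Hb : 0 <= b) by (apply lsum_nonneg; intros; apply pow2_ge_0).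
  destruct (Req_dec b 0) as [Hb0|Hb0].
  - destruct (Req_dec c 0) as [Hc0|Hc0]. rewrite Hc0, Hb0; lra.
    exfalso. specialize (Q ((a+1)/c)). rewrite Hb0 in Q.
    replace (a - 2 * ((a + 1) / c) * c + ((a + 1) / c) ^ 2 * 0) with (- a - 2) in Q by (field; auto). lra.
  - specialize (Q (c / b)).
    replace (a - 2 * (c / b) * c + (c / b) ^ 2 * b) with (a - c^2 / b) in Q by (field; auto).
    assert (c^2 / b <= a) by lra.
    apply (Rmult_le_compat_r b) in H; [|lra]. unfold Rdiv in H. rewrite Rmult_assoc, Rinv_l in H; lra.
Qed.

Lemma lsum_CS {A} (l : list A) F G :
  Rabs (lsum l (fun x => F x * G x)) <= sqrt (lsum l (fun x => F x ^ 2)) * sqrt (lsum l (fun x => G x ^ 2)).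
Proof.
  rewrite <- sqrt_mult. rewrite <- sqrt_Rsqr_abs. apply sqrt_le_1_alt. unfold Rsqr.
  pose proof (lsum_CS2 l F G). revert H. generalize (lsum l (fun x => F x * G x)). intros c Hc.
  replace (c * c) with (c ^ 2) by ring. exact Hc.
  apply lsum_nonneg; intros; apply pow2_ge_0. apply lsum_nonneg; intros; apply pow2_ge_0.
Qed.

Lemma lsum_delta l m F c : NoDup l -> In m l ->
  lsum l (fun j => F j * (if Nat.eqb j m then c else 0)) = F m * c.
Proof.
  induction l; intros Hnd Hin. inversion Hin.
  rewrite lsum_cons. inversion Hnd; subst. destruct Hin as [E|Hin].
  - subst. rewrite Nat.eqb_refl. rewrite (lsum_ext _ _ (fun _ => 0)). rewrite lsum_zero; ring.
    intros x Hx. assert (Nat.eqb x m = false). { apply Nat.eqb_neq. intro; subst; auto. } rewrite H; ring.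
  - rewrite IHl; auto. assert (Nat.eqb a m = false). { apply Nat.eqb_neq. intro; subst; auto. } rewrite H; ring.
Qed.

Lemma lsum_delta0 l m F c : ~ In m l ->
  lsum l (fun j => F j * (if Nat.eqb j m then c else 0)) = 0.
Proof. intros H. rewrite (lsum_ext _ _ (fun _ => 0)). apply lsum_zero.
  intros x Hx. assert (Nat.eqb x m = false). { apply Nat.eqb_neq. intro; subst; auto. } rewrite H0; ring. Qed.

Definition Tn (p : R -> R) (l : list nat) (t : R) : R :=
  Cc 0 p + 2 * lsum l (fun j => Cc j p * cos (INR j * t) + Sc j p * sin (INR j * t)).

Lemma cont_Tn p l : cont (Tn p l).
Proof. unfold Tn. apply cont_plus. apply cont_const. apply cont_scal.
  apply (cont_lsum l (fun j t => Cc j p * cos (INR j * t) + Sc j p * sin (INR j * t))).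
  intros j. apply cont_plus; apply cont_scal. apply cont_cosl. apply cont_sinl. Qed.


Create HintDb contdb.
Ltac sc := cbv beta; match goal with
 | |- cont (fun _ => ?c) => apply cont_const
 | |- cont (fun x => x) => apply cont_id
 | |- cont (fun _ => _ + _) => apply cont_plus; sc
 | |- cont (fun _ => _ - _) => apply cont_minus; sc
 | |- cont (fun _ => - _) => apply cont_opp; sc
 | |- cont (fun _ => _ * _) => apply cont_mult; sc
 | |- cont (fun t => cos (?k * t)) => apply cont_cosl
 | |- cont (fun t => sin (?k * t)) => apply cont_sinl
 | |- cont (Rmult ?c) => apply (cont_scal c (fun x => x)); apply cont_id
 | |- cont (fun _ => cos _) => apply (cont_comp _ cos); [sc | apply cont_cos]
 | |- cont (fun _ => sin _) => apply (cont_comp _ sin); [sc | apply cont_sin]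
 | |- cont (fun _ => _ ^ _) => apply cont_pow; sc
 | |- cont (fun _ => Rabs _) => apply cont_abs; sc
 | |- cont (fun _ => lsum _ _) => apply cont_lsum; sc
 | |- cont (Tn _ _) => apply cont_Tn
 | |- cont (fun t => Tn _ _ t) => apply cont_Tn
 | |- cont (fun t => ?p (t + _)) => apply cont_shift; sc
 | |- cont _ => first [assumption | solve [eauto with contdb]]
 | |- forall _ : nat, _ => intro; sc
 end.

Lemma Tn_period p l t : Tn p l (t + 2*PI) = Tn p l t.
Proof. unfold Tn. f_equal. f_equal. apply lsum_ext. intros j _.
  replace (INR j * (t + 2*PI)) with (INR j * t + 2 * INR j * PI) by ring.
  rewrite cos_period, sin_period. reflexivity. Qed.

Lemma Cc_RI l p : RI (fun t => p t * cos (INR l * t)) 0 (2*PI) = 2*PI * Cc l p.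
Proof. unfold Cc. pose proof PI2_pos. field. lra. Qed.
Lemma Sc_RI l p : RI (fun t => p t * sin (INR l * t)) 0 (2*PI) = 2*PI * Sc l p.
Proof. unfold Sc. pose proof PI2_pos. field. lra. Qed.

Lemma expand_Tn psi p l : cont psi ->
  RI (fun t => psi t * Tn p l t) 0 (2*PI) =
  2*PI * (Cc 0 p * Cc 0 psi + 2 * lsum l (fun j => Cc j p * Cc j psi + Sc j p * Sc j psi)).
Proof.
  intros Hpsi.
  rewrite (RI_ext _ (fun t => Cc 0 p * (psi t * cos (INR 0 * t)) + 2 * lsum l (fun j =>
        Cc j p * (psi t * cos (INR j * t)) + Sc j p * (psi t * sin (INR j * t))))).
  rewrite RI_plus. rewrite RI_scal. rewrite RI_scal.
  rewrite (RI_lsum l (fun j t => Cc j p * (psi t * cos (INR j * t)) + Sc j p * (psi t * sin (INR j * t)))).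
  rewrite Cc_RI.
  rewrite (lsum_ext _ _ (fun j => 2*PI * (Cc j p * Cc j psi + Sc j p * Sc j psi))).
  rewrite lsum_scal. ring.
  intros j _. rewrite RI_plus, !RI_scal, Cc_RI, Sc_RI. ring.
  all: try sc.
  intros t. unfold Tn. simpl. rewrite Rmult_0_l, cos_0, Rmult_1_r.
  rewrite Rmult_plus_distr_l. f_equal. ring.
  rewrite <- lsum_scal. rewrite <- lsum_scal. rewrite <- lsum_scal. idtac.
  apply lsum_ext. intros; ring.
Qed.

Lemma Cc_ext l p q : (forall t, p t = q t) -> Cc l p = Cc l q.
Proof. intros E. unfold Cc. f_equal. apply RI_ext. intros; rewrite E; auto. Qed.
Lemma Sc_ext l p q : (forall t, p t = q t) -> Sc l p = Sc l q.
Proof. intros E. unfold Sc. f_equal. apply RI_ext. intros; rewrite E; auto. Qed.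

Lemma Sc0 p : Sc 0 p = 0.
Proof. unfold Sc. rewrite (RI_ext _ (fun _ => 0)). rewrite RI_const; ring.
  intros; simpl. rewrite Rmult_0_l, sin_0; ring. Qed.

Lemma coef_Tn p l m : NoDup l -> ~ In 0%nat l -> (m = 0%nat \/ In m l) ->
  Cc m (Tn p l) = Cc m p /\ Sc m (Tn p l) = Sc m p.
Proof.
  intros Hnd H0 Hm. pose proof PI2_pos.
  assert (Hj : forall j, In j l -> Nat.eqb j 0 = false).
  { intros j Hj. apply Nat.eqb_neq. intro; subst; auto. }
  split.
  - unfold Cc at 1. rewrite (RI_ext _ (fun t => cos (INR m * t) * Tn p l t)) by (intros; ring).
    rewrite expand_Tn by apply cont_cosl.
    rewrite (lsum_ext _ _ (fun j => Cc j p * (if Nat.eqb j m then /2 else 0) + Sc j p * 0)).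
    rewrite lsum_plus. rewrite (lsum_ext _ (fun j => Sc j p * 0) (fun _ => 0)) by (intros; ring).
    rewrite lsum_zero. rewrite Cc_cos.
    destruct Hm as [Hm|Hm].
    + subst. rewrite lsum_delta0 by auto. simpl. field. lra.
    + rewrite lsum_delta by auto. assert (Nat.eqb 0 m = false). { apply Nat.eqb_neq. intro; subst; auto. }
      rewrite H1. field. lra.
    + intros j Hjl. rewrite Cc_cos, Sc_cos. rewrite Hj by auto. reflexivity.
  - destruct Hm as [Hm|Hm].
    + subst. rewrite !Sc0. reflexivity.
    + unfold Sc at 1. rewrite (RI_ext _ (fun t => sin (INR m * t) * Tn p l t)) by (intros; ring).
      rewrite expand_Tn by apply cont_sinl.
      rewrite (lsum_ext _ _ (fun j => Sc j p * (if Nat.eqb j m then /2 else 0) + Cc j p * 0)).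
      rewrite lsum_plus. rewrite (lsum_ext _ (fun j => Cc j p * 0) (fun _ => 0)) by (intros; ring).
      rewrite lsum_zero. rewrite Cc_sin. rewrite lsum_delta by auto. field. lra.
      intros j Hjl. rewrite Cc_sin, Sc_sin. rewrite Hj by auto. ring.
Qed.

Lemma bessel p l : cont p -> NoDup l -> ~ In 0%nat l ->
  Cc 0 p ^ 2 + 2 * lsum l (fun j => Cc j p ^ 2 + Sc j p ^ 2) <= / (2*PI) * RI (fun t => p t ^ 2) 0 (2*PI).
Proof.
  intros Hp Hnd H0. pose proof PI2_pos.
  set (B := Cc 0 p ^ 2 + 2 * lsum l (fun j => Cc j p ^ 2 + Sc j p ^ 2)).
  assert (E1 : RI (fun t => p t * Tn p l t) 0 (2*PI) = 2*PI*B).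
  { rewrite expand_Tn by auto. unfold B. f_equal. f_equal. ring. f_equal. apply lsum_ext; intros; ring. }
  assert (E2 : RI (fun t => Tn p l t * Tn p l t) 0 (2*PI) = 2*PI*B).
  { rewrite expand_Tn by apply cont_Tn. unfold B. f_equal.
    destruct (coef_Tn p l 0 Hnd H0 (or_introl eq_refl)) as [-> _].
    f_equal. ring. f_equal. apply lsum_ext. intros j Hj.
    destruct (coef_Tn p l j Hnd H0 (or_intror Hj)) as [-> ->]. ring. }
  assert (Hpos : 0 <= RI (fun t => (p t - Tn p l t)^2) 0 (2*PI)).
  { apply RI_ge0. lra. apply cont_pow, cont_minus; auto. apply cont_Tn. intros; apply pow2_ge_0. }
  rewrite (RI_ext _ (fun t => p t ^ 2 - 2 * (p t * Tn p l t) + Tn p l t * Tn p l t)) in Hpos by (intros; ring).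
  assert (Cp2 : cont (fun t => p t ^ 2)) by (apply cont_pow; auto).
  assert (CpT : cont (fun t => p t * Tn p l t)) by (apply cont_mult; auto; apply cont_Tn).
  assert (CTT : cont (fun t => Tn p l t * Tn p l t)) by (apply cont_mult; apply cont_Tn).
  rewrite RI_plus, RI_minus, RI_scal, E1, E2 in Hpos; auto.
  apply (Rmult_le_reg_l (2*PI)). lra. rewrite <- Rmult_assoc, Rinv_r, Rmult_1_l by lra. lra.
  apply cont_scal; auto. apply cont_minus; auto. apply cont_scal; auto.
Qed.

Lemma cont_pt f x : cont f -> continuity_pt f x.
Proof. intros H. apply continuity_pt_filterlim. apply H. Qed.

Lemma cont_eps f x eps : cont f -> 0 < eps ->
  exists del, 0 < del /\ forall y, Rabs (y - x) < del -> Rabs (f y - f x) < eps.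
Proof.
  intros Hf He. pose proof (cont_pt f x Hf) as H. unfold continuity_pt, continue_in, limit1_in, limit_in in H.
  destruct (H eps He) as [alp [Ha Hb]]. exists alp. split; auto. intros y Hy.
  destruct (Req_dec y x) as [E|E]. subst. rewrite Rminus_diag, Rabs_R0; auto.
  apply (Hb y). split. split. exact I. auto. simpl. unfold R_dist. auto.
Qed.

Lemma shift_coef psi m t0 : cont psi -> (forall t, psi (t + 2*PI) = psi t) ->
  RI (fun th => psi (th + t0) * cos (INR m * th)) (-PI) PI =
  2*PI * (cos (INR m * t0) * Cc m psi + sin (INR m * t0) * Sc m psi).
Proof.
  intros Hc Hp.
  rewrite (RI_ext _ (fun th => cos (INR m * t0) * (fun t => psi t * cos (INR m * t)) (th + t0)
                            + sin (INR m * t0) * (fun t => psi t * sin (INR m * t)) (th + t0))).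
  rewrite RI_lin2. cbv beta.
  rewrite (RI_shift (fun t => psi t * cos (INR m * t))).
  rewrite (RI_shift (fun t => psi t * sin (INR m * t))).
  replace (PI + t0) with ((-PI + t0) + 2*PI) by ring.
  rewrite !RI_period. rewrite Cc_RI, Sc_RI. ring.
  all: try sc.
  intros t. rewrite Hp. replace (INR m * (t + 2*PI)) with (INR m * t + 2 * INR m * PI) by ring. rewrite sin_period; auto.
  intros t. rewrite Hp. replace (INR m * (t + 2*PI)) with (INR m * t + 2 * INR m * PI) by ring. rewrite cos_period; auto.
  intros th. cbv beta. replace (INR m * th) with (INR m * (th + t0) - INR m * t0) by ring.
  rewrite cos_minus. ring_simplify. f_equal; f_equal; f_equal; ring.
Qed.

Inductive cpoly (n : nat) : (R -> R) -> Prop :=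
 | cp_cos m : (m <= n)%nat -> cpoly n (fun th => cos (INR m * th))
 | cp_lin a P Q : cpoly n P -> cpoly n Q -> cpoly n (fun th => a * P th + Q th)
 | cp_ext P Q : cpoly n P -> (forall th, P th = Q th) -> cpoly n Q.

Lemma cpoly_cont n P : cpoly n P -> cont P.
Proof. induction 1. apply cont_cosl. apply cont_plus; auto. apply cont_scal; auto. apply (cont_ext P); auto. Qed.

Lemma cpoly_mono n P : cpoly n P -> cpoly (S n) P.
Proof. induction 1. apply cp_cos; lia. apply cp_lin; auto. eapply cp_ext; eauto. Qed.

Lemma cp_zero n : cpoly n (fun _ => 0).
Proof. apply (cp_ext n (fun th => (-1) * cos (INR 0 * th) + cos (INR 0 * th))).
  apply cp_lin; apply cp_cos; lia. intros; ring. Qed.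

Lemma cpoly_mulcos n P : cpoly n P -> cpoly (S n) (fun th => P th * cos th).
Proof.
  induction 1.
  - destruct m as [|k].
    + apply (cp_ext _ (fun th => cos (INR 1 * th))). apply cp_cos; lia.
      intros th. simpl. rewrite Rmult_0_l, cos_0, !Rmult_1_l. reflexivity.
    + apply (cp_ext _ (fun th => /2 * cos (INR (S (S k)) * th) + (/2 * cos (INR k * th) + 0))).
      apply cp_lin. apply cp_cos; lia. apply cp_lin. apply cp_cos; lia. apply cp_zero.
      intros th. rewrite !S_INR.
      replace ((INR k + 1 + 1) * th) with ((INR k + 1) * th + th) by ring.
      replace (INR k * th) with ((INR k + 1) * th - th) by ring.
      rewrite cos_plus, cos_minus. field.
  - apply (cp_ext _ (fun th => a * (P th * cos th) + Q th * cos th)). apply cp_lin; auto. intros; ring.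
  - apply (cp_ext _ (fun th => P th * cos th)); auto. intros; rewrite H0; auto.
Qed.

Definition kern (n : nat) (th : R) : R := ((1 + cos th) / 2) ^ n.

Lemma kern_cpoly n : cpoly n (kern n).
Proof.
  induction n.
  - apply (cp_ext _ (fun th => cos (INR 0 * th))). apply cp_cos; lia.
    intros; unfold kern; simpl. rewrite Rmult_0_l, cos_0. reflexivity.
  - apply (cp_ext _ (fun th => /2 * kern n th + (/2 * (kern n th * cos th) + 0))).
    apply cp_lin. apply cpoly_mono; auto. apply cp_lin. apply cpoly_mulcos; auto. apply cp_zero.
    intros th. unfold kern. simpl. field.
Qed.

Lemma cont_kern n : cont (kern n).
Proof. apply (cpoly_cont n), kern_cpoly. Qed.

#[export] Hint Resolve cont_kern : contdb.

Lemma kern_ge0 n th : 0 <= kern n th.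
Proof. unfold kern. apply pow_le. pose proof (COS_bound th). lra. Qed.

Lemma reproduce psi1 psi2 n t0 P : cont psi1 -> cont psi2 ->
  (forall t, psi1 (t + 2*PI) = psi1 t) -> (forall t, psi2 (t + 2*PI) = psi2 t) ->
  (forall m, (m <= n)%nat -> Cc m psi1 = Cc m psi2 /\ Sc m psi1 = Sc m psi2) ->
  cpoly n P ->
  RI (fun th => psi1 (th + t0) * P th) (-PI) PI = RI (fun th => psi2 (th + t0) * P th) (-PI) PI.
Proof.
  intros C1 C2 P1 P2 Hco HP. induction HP.
  - rewrite !shift_coef; auto. destruct (Hco m H) as [-> ->]. reflexivity.
  - pose proof (cpoly_cont n P HP1). pose proof (cpoly_cont n Q HP2).
    rewrite (RI_ext _ (fun th => a * (psi1 (th + t0) * P th) + psi1 (th + t0) * Q th)) by (intros; ring).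
    rewrite (RI_ext (fun th => psi2 (th + t0) * _) (fun th => a * (psi2 (th + t0) * P th) + psi2 (th + t0) * Q th)) by (intros; ring).
    rewrite !RI_plus, !RI_scal, IHHP1, IHHP2; auto. all: try sc.
  - rewrite <- (RI_ext (fun th => psi1 (th + t0) * P th) (fun th => psi1 (th + t0) * Q th)) by (intros; rewrite H; auto).
    rewrite <- (RI_ext (fun th => psi2 (th + t0) * P th) (fun th => psi2 (th + t0) * Q th)) by (intros; rewrite H; auto). auto.
Qed.

Lemma cos_abs th : cos th = cos (Rabs th).
Proof. unfold Rabs. destruct (Rcase_abs th). rewrite cos_neg; auto. auto. Qed.

Lemma cos_le_abs a th : 0 <= a <= PI -> Rabs th <= a -> cos a <= cos th.
Proof. intros Ha Ht. rewrite (cos_abs th). destruct (Req_dec (Rabs th) a) as [E|E]. rewrite E; lra.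
  left. apply cos_decreasing_1; try lra. apply Rabs_pos. Qed.

Lemma cos_ge_abs a th : 0 <= a -> a <= Rabs th <= PI -> cos th <= cos a.
Proof. intros Ha Ht. rewrite (cos_abs th). destruct (Req_dec (Rabs th) a) as [E|E]. rewrite E; lra.
  left. apply cos_decreasing_1; try lra. Qed.

Lemma approx phi t0 eps : cont phi -> 0 < eps -> exists n,
  0 < RI (kern n) (-PI) PI /\
  Rabs (RI (fun th => (phi (th + t0) - phi t0) * kern n th) (-PI) PI) <= eps * RI (kern n) (-PI) PI.
Proof.
  intros Hphi He. pose proof PI_RGT_0 as HPI.
  destruct (cont_eps phi t0 (eps/2) Hphi) as [d0 [Hd0 Hc]]. lra.
  set (d := Rmin d0 (PI/2)).
  assert (Hd : 0 < d) by (unfold d; apply Rmin_glb_lt; lra).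
  assert (Hdd0 : d <= d0) by apply Rmin_l.
  assert (HdPI : d <= PI/2) by apply Rmin_r.
  set (h := fun th => Rabs (phi (th + t0) - phi t0)).
  destruct (continuity_ab_maj h (-PI) PI) as [Mx [HM HMx]]. lra.
  { intros c _. apply cont_pt. unfold h. sc. }
  set (B := h Mx).
  assert (HB0 : 0 <= B) by (unfold B, h; apply Rabs_pos).
  set (q := (1 + cos d) / 2). set (q' := (1 + cos (d/2)) / 2).
  assert (Hc1 : cos d < cos (d/2)) by (apply cos_decreasing_1; lra).
  assert (Hc2 : 0 < cos (d/2)) by (apply cos_gt_0; lra).
  assert (Hq : 0 <= q) by (unfold q; pose proof (COS_bound d); lra).
  assert (Hq' : 0 < q') by (unfold q'; lra).
  assert (Hqq : q < q') by (unfold q, q'; lra).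
  set (x := q / q').
  assert (Hx0 : 0 <= x) by (unfold x; apply Rdiv_le_0_compat; lra).
  assert (Hx1 : x < 1). { unfold x. apply (Rmult_lt_reg_r q'). lra. unfold Rdiv. rewrite Rmult_assoc, Rinv_l; lra. }
  set (y := eps * d / (4 * PI * (B + 1))).
  assert (Hy : 0 < y). { unfold y. apply Rdiv_lt_0_compat. nra. nra. }
  destruct (pow_lt_1_zero x ltac:(rewrite Rabs_right; lra) y Hy) as [n Hn].
  specialize (Hn n (le_n n)). rewrite Rabs_right in Hn by (apply Rle_ge, pow_le; lra).
  exists n.
  assert (Hlow : d * q' ^ n <= RI (kern n) (-PI) PI).
  { rewrite <- (RI_chasles (kern n) (-PI) (-(d/2)) PI) by apply cont_kern.
    rewrite <- (RI_chasles (kern n) (-(d/2)) (d/2) PI) by apply cont_kern.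
    assert (0 <= RI (kern n) (-PI) (-(d/2))) by (apply RI_ge0; [lra|apply cont_kern|intros; apply kern_ge0]).
    assert (0 <= RI (kern n) (d/2) PI) by (apply RI_ge0; [lra|apply cont_kern|intros; apply kern_ge0]).
    assert (d * q' ^ n <= RI (kern n) (-(d/2)) (d/2)).
    { replace (d * q' ^ n) with (RI (fun _ => q' ^ n) (-(d/2)) (d/2)) by (rewrite RI_const; field).
      apply RI_le. lra. apply cont_const. apply cont_kern.
      intros th Hth. unfold kern. apply pow_incr. split. lra.
      assert (cos (d/2) <= cos th). { apply cos_le_abs. lra. unfold Rabs; destruct (Rcase_abs th); lra. }
      unfold q'; lra. }
    lra. }
  assert (HK : 0 < RI (kern n) (-PI) PI).
  { eapply Rlt_le_trans; [|exact Hlow]. apply Rmult_lt_0_compat; auto. apply pow_lt; auto. }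
  split; auto.
  assert (Hup : RI (fun th => Rabs ((phi (th + t0) - phi t0) * kern n th)) (-PI) PI <=
                RI (fun th => eps/2 * kern n th + B * q ^ n) (-PI) PI).
  { apply RI_le. lra. sc. sc.
    intros th Hth. rewrite Rabs_mult. rewrite (Rabs_right (kern n th)) by (apply Rle_ge, kern_ge0).
    pose proof (kern_ge0 n th).
    assert (HqB : 0 <= B * q ^ n) by (apply Rmult_le_pos; auto; apply pow_le; auto).
    destruct (Rlt_le_dec (Rabs th) d) as [Hlt|Hge].
    - assert (Rabs (phi (th + t0) - phi t0) < eps/2). { apply Hc. replace (th + t0 - t0) with th by ring. lra. }
      nra.
    - assert (kern n th <= q ^ n).
      { unfold kern. apply pow_incr. split. pose proof (COS_bound th); lra.
        assert (cos th <= cos d). { apply cos_ge_abs. lra. split; auto. unfold Rabs; destruct (Rcase_abs th); lra. }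
        unfold q; lra. }
      assert (Rabs (phi (th + t0) - phi t0) <= B) by (apply (HM th); lra).
      assert (Rabs (phi (th + t0) - phi t0) * kern n th <= B * q ^ n).
      { apply Rmult_le_compat; auto. apply Rabs_pos. }
      nra. }
  rewrite RI_plus in Hup. rewrite RI_scal, RI_const in Hup. all: try sc.
  assert (Hqn : q ^ n = x ^ n * q' ^ n). { rewrite <- Rpow_mult_distr. f_equal. unfold x. field. lra. }
  assert (Hbig : B * q ^ n * (PI - - PI) <= eps / 2 * (d * q' ^ n)).
  { rewrite Hqn. assert (0 < q' ^ n) by (apply pow_lt; auto).
    assert (B * x ^ n <= (B + 1) * y). { assert (0 <= x ^ n) by (apply pow_le; lra). apply Rmult_le_compat; lra. }
    assert ((B + 1) * y * (2 * PI) = eps * d / 2) by (unfold y; field; lra).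
    replace (B * (x ^ n * q' ^ n) * (PI - - PI)) with ((B * x ^ n) * (2 * PI) * q' ^ n) by ring.
    apply Rle_trans with ((B + 1) * y * (2 * PI) * q' ^ n).
    apply Rmult_le_compat_r. lra. apply Rmult_le_compat_r. lra. auto.
    rewrite H1. right; field. }
  eapply Rle_trans. apply RI_abs. lra. sc.
  assert (eps / 2 * (d * q' ^ n) <= eps / 2 * RI (kern n) (-PI) PI) by (apply Rmult_le_compat_l; lra). lra.
Qed.

Lemma sup_by_Tn phi t0 Bd : cont phi -> (forall t, phi (t + 2*PI) = phi t) ->
  (forall n th, Rabs (Tn phi (List.seq 1 n) th) <= Bd) -> Rabs (phi t0) <= Bd.
Proof.
  intros Hc Hp HB. apply Rle_plus_epsilon. intros eps He.
  destruct (approx phi t0 eps Hc He) as [n [HK Hap]].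
  set (K := RI (kern n) (-PI) PI) in *.
  set (I := RI (fun th => phi (th + t0) * kern n th) (-PI) PI).
  assert (E1 : RI (fun th => (phi (th + t0) - phi t0) * kern n th) (-PI) PI = I - phi t0 * K).
  { rewrite (RI_ext _ (fun th => phi (th + t0) * kern n th - phi t0 * kern n th)) by (intros; ring).
    rewrite RI_minus, RI_scal. reflexivity. apply cont_kern. sc. sc. }
  assert (E2 : I = RI (fun th => Tn phi (List.seq 1 n) (th + t0) * kern n th) (-PI) PI).
  { apply (reproduce phi (Tn phi (List.seq 1 n)) n t0 (kern n)); auto. apply cont_Tn.
    intros; apply Tn_period.
    intros m Hm. destruct (coef_Tn phi (List.seq 1 n) m) as [A1 A2].
    apply List.seq_NoDup. rewrite List.in_seq. lia.
    destruct m. left; auto. right. apply List.in_seq. lia.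
    split; symmetry; auto.
    apply kern_cpoly. }
  assert (HI : Rabs I <= Bd * K).
  { rewrite E2. eapply Rle_trans. apply RI_abs. pose proof PI_RGT_0; lra. sc.
    unfold K. rewrite <- RI_scal by apply cont_kern. apply RI_le. pose proof PI_RGT_0; lra.
    sc. sc.
    intros th _. rewrite Rabs_mult, (Rabs_right (kern n th)) by (apply Rle_ge, kern_ge0).
    apply Rmult_le_compat_r. apply kern_ge0. apply HB. }
  rewrite E1 in Hap.
  assert (Rabs (phi t0) * K <= (Bd + eps) * K).
  { rewrite <- (Rabs_right K) by lra. rewrite <- Rabs_mult.
    replace (phi t0 * K) with (I - (I - phi t0 * K)) by ring.
    eapply Rle_trans. apply Rabs_triang. rewrite Rabs_Ropp. rewrite (Rabs_right K) by lra. lra. }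
  apply Rmult_le_reg_r with K; auto.
Qed.

Definition IN (N : nat) : list (fintype.ordinal N) := ltac:(let t := eval unfold sumI in (@sumI N (fun _ => 0%R)) in match t with seq.foldr _ _ (seq.map _ ?L) => exact L end).

Lemma sumI_lsum N (F : fintype.ordinal N -> R) : sumI F = lsum (IN N) F.
Proof. reflexivity. Qed.
Lemma mv_lsum N (M : mat N) v i : mv M v i = lsum (IN N) (fun k => M i k * v k).
Proof. reflexivity. Qed.
Lemma vnorm_sq N (v : vec N) : vnorm v ^ 2 = lsum (IN N) (fun i => v i ^ 2).
Proof. unfold vnorm. rewrite sumI_lsum. rewrite pow2_sqrt. reflexivity.
  apply lsum_nonneg; intros; apply pow2_ge_0. Qed.
Lemma vnorm_def N (v : vec N) : vnorm v = sqrt (lsum (IN N) (fun i => v i ^ 2)).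
Proof. reflexivity. Qed.
Lemma cnorm_def N (v : cvec N) : cnorm v = sqrt (lsum (IN N) (fun i => fst v i ^ 2 + snd v i ^ 2)).
Proof. reflexivity. Qed.
Lemma cnorm_sq N (v : cvec N) : cnorm v ^ 2 = lsum (IN N) (fun i => fst v i ^ 2 + snd v i ^ 2).
Proof. unfold cnorm. rewrite sumI_lsum. rewrite pow2_sqrt. reflexivity.
  apply lsum_nonneg; intros. pose proof (pow2_ge_0 (fst v x)); pose proof (pow2_ge_0 (snd v x)); lra. Qed.
Lemma vnorm_ge0 N (v : vec N) : 0 <= vnorm v.
Proof. apply sqrt_pos. Qed.
Lemma cnorm_ge0 N (v : cvec N) : 0 <= cnorm v.
Proof. apply sqrt_pos. Qed.
Lemma vnorm_ext N (v w : vec N) : (forall i, v i = w i) -> vnorm v = vnorm w.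
Proof. intros E. unfold vnorm. rewrite !sumI_lsum. f_equal. apply lsum_ext. intros; rewrite E; auto. Qed.
Lemma cnorm_ext N (v w : cvec N) : (forall i, fst v i = fst w i /\ snd v i = snd w i) -> cnorm v = cnorm w.
Proof. intros E. unfold cnorm. rewrite !sumI_lsum. f_equal. apply lsum_ext. intros i _.
  destruct (E i) as [-> ->]; auto. Qed.

Lemma lsum_mulr {A} (l : list A) F c : lsum l F * c = lsum l (fun x => F x * c).
Proof. rewrite Rmult_comm, <- lsum_scal. apply lsum_ext. intros; ring. Qed.

Lemma Cc_lsum {A} (l : list A) (c : A -> R) (F : A -> R -> R) j : (forall k, cont (F k)) ->
  Cc j (fun t => lsum l (fun k => c k * F k t)) = lsum l (fun k => c k * Cc j (F k)).
Proof.
  intros HF. unfold Cc.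
  rewrite (RI_ext _ (fun t => lsum l (fun k => c k * (F k t * cos (INR j * t))))).
  rewrite RI_lsum. rewrite <- lsum_scal. apply lsum_ext. intros k _. rewrite RI_scal. ring.
  sc. intros k; sc. intros t. rewrite lsum_mulr. apply lsum_ext; intros; ring.
Qed.
Lemma Sc_lsum {A} (l : list A) (c : A -> R) (F : A -> R -> R) j : (forall k, cont (F k)) ->
  Sc j (fun t => lsum l (fun k => c k * F k t)) = lsum l (fun k => c k * Sc j (F k)).
Proof.
  intros HF. unfold Sc.
  rewrite (RI_ext _ (fun t => lsum l (fun k => c k * (F k t * sin (INR j * t))))).
  rewrite RI_lsum. rewrite <- lsum_scal. apply lsum_ext. intros k _. rewrite RI_scal. ring.
  sc. intros k; sc. intros t. rewrite lsum_mulr. apply lsum_ext; intros; ring.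
Qed.

Lemma Cc_lin2 j p q al be : cont p -> cont q ->
  Cc j (fun t => al * p t + be * q t) = al * Cc j p + be * Cc j q.
Proof. intros Hp Hq. unfold Cc.
  rewrite (RI_ext _ (fun t => al * (p t * cos (INR j * t)) + be * (q t * cos (INR j * t)))) by (intros; ring).
  rewrite RI_lin2 by sc. ring. Qed.
Lemma Sc_lin2 j p q al be : cont p -> cont q ->
  Sc j (fun t => al * p t + be * q t) = al * Sc j p + be * Sc j q.
Proof. intros Hp Hq. unfold Sc.
  rewrite (RI_ext _ (fun t => al * (p t * sin (INR j * t)) + be * (q t * sin (INR j * t)))) by (intros; ring).
  rewrite RI_lin2 by sc. ring. Qed.

Lemma coef_shift psi c j : cont psi -> (forall t, psi (t + 2*PI) = psi t) ->
  Cc j (fun t => psi (t + c)) = cos (INR j * c) * Cc j psi + sin (INR j * c) * Sc j psi /\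
  Sc j (fun t => psi (t + c)) = cos (INR j * c) * Sc j psi - sin (INR j * c) * Cc j psi.
Proof.
  intros Hc Hp.
  assert (Pc : forall t, psi (t + 2*PI) * cos (INR j * (t + 2*PI)) = psi t * cos (INR j * t)).
  { intros t. rewrite Hp. replace (INR j * (t + 2*PI)) with (INR j * t + 2 * INR j * PI) by ring. rewrite cos_period; auto. }
  assert (Ps : forall t, psi (t + 2*PI) * sin (INR j * (t + 2*PI)) = psi t * sin (INR j * t)).
  { intros t. rewrite Hp. replace (INR j * (t + 2*PI)) with (INR j * t + 2 * INR j * PI) by ring. rewrite sin_period; auto. }
  assert (Ec : RI (fun t => psi (t + c) * cos (INR j * (t + c))) 0 (2*PI) = 2*PI * Cc j psi).
  { rewrite (RI_shift (fun t => psi t * cos (INR j * t))). replace (2*PI + c) with ((0 + c) + 2*PI) by ring.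
    rewrite RI_period; auto. apply Cc_RI. sc. sc. }
  assert (Es : RI (fun t => psi (t + c) * sin (INR j * (t + c))) 0 (2*PI) = 2*PI * Sc j psi).
  { rewrite (RI_shift (fun t => psi t * sin (INR j * t))). replace (2*PI + c) with ((0 + c) + 2*PI) by ring.
    rewrite RI_period; auto. apply Sc_RI. sc. sc. }
  pose proof PI2_pos.
  split.
  - unfold Cc. rewrite (RI_ext _ (fun t => cos (INR j * c) * (psi (t + c) * cos (INR j * (t + c)))
                                  + sin (INR j * c) * (psi (t + c) * sin (INR j * (t + c))))).
    rewrite RI_lin2, Ec, Es. unfold Cc, Sc. field. lra. sc. sc.
    intros t. replace (INR j * t) with (INR j * (t + c) - INR j * c) by ring. rewrite cos_minus.
    replace (INR j * (t + c) - INR j * c + INR j * c) with (INR j * (t + c)) by ring. ring.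
  - unfold Sc. rewrite (RI_ext _ (fun t => cos (INR j * c) * (psi (t + c) * sin (INR j * (t + c)))
                                  + (- sin (INR j * c)) * (psi (t + c) * cos (INR j * (t + c))))).
    rewrite RI_lin2, Ec, Es. unfold Cc, Sc. field. lra. sc. sc.
    intros t. replace (INR j * t) with (INR j * (t + c) - INR j * c) by ring. rewrite sin_minus.
    replace (INR j * (t + c) - INR j * c + INR j * c) with (INR j * (t + c)) by ring. ring.
Qed.

Lemma Cc_mv N (M : mat N) (u : R -> vec N) j i : (forall k, cont (fun t => u t k)) ->
  Cc j (fun t => mv M (u t) i) = mv M (fun k => Cc j (fun t => u t k)) i.
Proof. intros Hc. rewrite mv_lsum. rewrite <- (Cc_lsum (IN N) (fun k => M i k) (fun k t => u t k)). reflexivity. auto. Qed.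
Lemma Sc_mv N (M : mat N) (u : R -> vec N) j i : (forall k, cont (fun t => u t k)) ->
  Sc j (fun t => mv M (u t) i) = mv M (fun k => Sc j (fun t => u t k)) i.
Proof. intros Hc. rewrite mv_lsum. rewrite <- (Sc_lsum (IN N) (fun k => M i k) (fun k t => u t k)). reflexivity. auto. Qed.
Lemma mv_opp N (M : mat N) v i : mv M (fun k => - v k) i = - mv M v i.
Proof. rewrite !mv_lsum. rewrite <- lsum_opp. apply lsum_ext; intros; ring. Qed.

Lemma sym_coef N (Rh : mat N) (c : R) (u : R -> vec N) (j : nat) :
  (forall i, cont (fun t => u t i)) -> (forall t i, u (t + 2 * PI) i = u t i) ->
  (forall t i, mv Rh (u (t - 2 * PI * c)) i = u t i) ->
  forall i, mv Rh (fun k => Cc j (fun t => u t k)) i =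
      cos (INR j * (2*PI*c)) * Cc j (fun t => u t i) + sin (INR j * (2*PI*c)) * Sc j (fun t => u t i) /\
    mv Rh (fun k => Sc j (fun t => u t k)) i =
      cos (INR j * (2*PI*c)) * Sc j (fun t => u t i) - sin (INR j * (2*PI*c)) * Cc j (fun t => u t i).
Proof.
  intros Hc Hp Hs i.
  assert (E : forall t, mv Rh (u t) i = u (t + 2*PI*c) i).
  { intros t. rewrite <- Hs. f_equal. f_equal. ring. }
  rewrite <- Cc_mv, <- Sc_mv by auto.
  rewrite (Cc_ext j (fun t => mv Rh (u t) i) (fun t => u (t + 2*PI*c) i)) by auto.
  rewrite (Sc_ext j (fun t => mv Rh (u t) i) (fun t => u (t + 2*PI*c) i)) by auto.
  apply (coef_shift (fun t => u t i)); auto.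
Qed.

Lemma fix_of_sym N (Rh : mat N) (c : R) (u : R -> vec N) :
  (forall i, cont (fun t => u t i)) -> (forall t i, u (t + 2 * PI) i = u t i) ->
  (forall t i, mv Rh (u (t - 2 * PI * c)) i = u t i) ->
  forall i, mv Rh (fun k => Cc 0 (fun t => u t k)) i = Cc 0 (fun t => u t i).
Proof.
  intros Hc Hp Hs i. destruct (sym_coef N Rh c u 0 Hc Hp Hs i) as [E _]. rewrite E.
  simpl. rewrite Rmult_0_l, cos_0, sin_0. ring.
Qed.

Lemma tw_of_sym N (Rh : mat N) (c : R) (u : R -> vec N) (l : nat) :
  (forall i, cont (fun t => u t i)) -> (forall t i, u (t + 2 * PI) i = u t i) ->
  (forall t i, mv Rh (u (t - 2 * PI * c)) i = u t i) ->
  let v := ((fun i => Cc l (fun t => u t i)), (fun i => - Sc l (fun t => u t i))) : cvec N in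
  let th := 2 * PI * INR l * c in
  forall i, cos th * mv Rh (fst v) i + sin th * mv Rh (snd v) i = fst v i /\
            cos th * mv Rh (snd v) i - sin th * mv Rh (fst v) i = snd v i.
Proof.
  intros Hc Hp Hs v th i. unfold v; simpl fst; simpl snd.
  rewrite mv_opp. destruct (sym_coef N Rh c u l Hc Hp Hs i) as [E1 E2]. rewrite E1, E2.
  replace (INR l * (2 * PI * c)) with th by (unfold th; ring).
  assert (Ecs : cos th ^ 2 + sin th ^ 2 = 1). { pose proof (sin2_cos2 th). unfold Rsqr in H. simpl. lra. }
  set (C := Cc l (fun t => u t i)). set (S := Sc l (fun t => u t i)).
  split.
  - transitivity (C * (cos th ^ 2 + sin th ^ 2)). ring. rewrite Ecs; ring.
  - transitivity (- S * (cos th ^ 2 + sin th ^ 2)). ring. rewrite Ecs; ring.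
Qed.

Lemma lsum_seq_sum F n k : lsum (List.seq k (S n)) F = sum_f_R0 (fun j => F (k + j)%nat) n.
Proof.
  revert k. induction n; intros k.
  - simpl. rewrite lsum_cons, lsum_nil. rewrite Nat.add_0_r. ring.
  - change (List.seq k (S (S n))) with (k :: List.seq (S k) (S n)). rewrite lsum_cons, IHn.
    rewrite (decomp_sum (fun j => F (k + j)%nat) (S n)) by lia. simpl pred.
    rewrite Nat.add_0_r. f_equal. apply sum_eq. intros; f_equal; lia.
Qed.

Lemma partial_le_sum F Sm n : (forall j, 0 <= F j) -> infinite_sum F Sm -> sum_f_R0 F n <= Sm.
Proof.
  intros Hp Hs. apply (growing_ineq (fun n => sum_f_R0 F n)).
  intros m. simpl. pose proof (Hp (S m)). lra. exact Hs.
Qed.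

Lemma CS_vec N (e w : vec N) : Rabs (lsum (IN N) (fun i => e i * w i)) <= vnorm e * vnorm w.
Proof. rewrite !vnorm_def. apply lsum_CS. Qed.

Lemma trig_ineq C S c s : (C * c + S * s) ^ 2 <= (C ^ 2 + (- S) ^ 2) * (c ^ 2 + s ^ 2).
Proof. assert (0 <= (C * s - S * c) ^ 2) by apply pow2_ge_0. nra. Qed.

Lemma Tn_bound N (u : R -> vec N) (e : vec N) l th :
  (forall k, cont (fun t => u t k)) ->
  Rabs (Tn (fun t => lsum (IN N) (fun i => e i * u t i)) l th) <=
   vnorm e * (vnorm (fun i => Cc 0 (fun t => u t i)) + 2 * lsum l (fun j =>
       cnorm ((fun i => Cc j (fun t => u t i)), (fun i => - Sc j (fun t => u t i))))).
Proof.
  intros Hc.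
  assert (CE : forall j, Cc j (fun t => lsum (IN N) (fun i => e i * u t i)) = lsum (IN N) (fun i => e i * Cc j (fun t => u t i))).
  { intros j. exact (Cc_lsum (IN N) e (fun k t => u t k) j Hc). }
  assert (SE : forall j, Sc j (fun t => lsum (IN N) (fun i => e i * u t i)) = lsum (IN N) (fun i => e i * Sc j (fun t => u t i))).
  { intros j. exact (Sc_lsum (IN N) e (fun k t => u t k) j Hc). }
  unfold Tn. rewrite CE.
  rewrite (lsum_ext l _ (fun j => lsum (IN N) (fun i => e i * (Cc j (fun t => u t i) * cos (INR j * th) + Sc j (fun t => u t i) * sin (INR j * th))))).
  2: { intros j _. rewrite CE, SE. rewrite !lsum_mulr. rewrite <- lsum_plus. apply lsum_ext; intros; ring. }
  eapply Rle_trans. apply Rabs_triang. rewrite Rabs_mult, (Rabs_right 2) by lra.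
  rewrite Rmult_plus_distr_l. apply Rplus_le_compat.
  - apply (CS_vec N e (fun i => Cc 0 (fun t => u t i))).
  - rewrite <- Rmult_assoc, (Rmult_comm (vnorm e) 2), Rmult_assoc. apply Rmult_le_compat_l. lra.
    eapply Rle_trans. apply lsum_abs. rewrite Rmult_comm, lsum_mulr. apply lsum_le. intros j _.
    eapply Rle_trans. apply (CS_vec N e (fun i => Cc j (fun t => u t i) * cos (INR j * th) + Sc j (fun t => u t i) * sin (INR j * th))).
    rewrite Rmult_comm. apply Rmult_le_compat_r. apply vnorm_ge0.
    rewrite vnorm_def, cnorm_def. apply sqrt_le_1_alt. apply lsum_le. intros i _. simpl fst; simpl snd.
    pose proof (trig_ineq (Cc j (fun t => u t i)) (Sc j (fun t => u t i)) (cos (INR j * th)) (sin (INR j * th))).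
    assert (cos (INR j * th) ^ 2 + sin (INR j * th) ^ 2 = 1).
    { pose proof (sin2_cos2 (INR j * th)). unfold Rsqr in H0. simpl. lra. }
    rewrite H0, Rmult_1_r in H. exact H.
Qed.

Lemma core N (A0 : mat N) (f0 : vec N -> vec N) (Nfa r Rb b mu s Ssum : R) (K : nat -> R)
  (Pfix : vec N -> Prop) (Ptw : nat -> cvec N -> Prop) (u u' : R -> vec N) :
  (forall v, Pfix v -> vnorm v <= K 0%nat * vnorm (fun i => - mv A0 v i)) ->
  (forall l, (1 <= l)%nat -> forall v, Ptw l v -> cnorm v <= K l * cnorm (Delta_c A0 l b v)) ->
  (forall l, 0 <= K l) ->
  infinite_sum (fun l => K l ^ 2) Ssum ->
  Nfa * (sqrt (2 * PI) * sqrt Ssum) < 1 ->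
  0 <= Nfa -> 0 <= r -> r < s -> s < Rb -> 0 <= mu <= 1 ->
  (forall x, vnorm x <= Rb -> vnorm (f0 x) <= Nfa * Rmax r (vnorm x)) ->
  (forall i t, derivable_pt_lim (fun t0 => u t0 i) t (u' t i)) ->
  (forall i t, continuity_pt (fun t0 => u' t0 i) t) ->
  (forall t i, u (t + 2 * PI) i = u t i) ->
  Pfix (fun i => Cc 0 (fun t => u t i)) ->
  (forall l, (1 <= l)%nat -> Ptw l ((fun i => Cc l (fun t => u t i)), (fun i => - Sc l (fun t => u t i)))) ->
  is_lub (fun x => exists t, x = vnorm (u t)) s ->
  (forall t i, b * u' t i = mv A0 (u t) i + mu * f0 (u t) i) ->
  False.
Proof.
  intros HK0 HKl HKpos HS HN HNfa Hr Hrs HsR Hmu Hf Hder Hcont Hper Hfix Htw Hlub Hode.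
  pose proof PI2_pos as H2PI.
  assert (Hd : forall i t, is_derive (fun t => u t i) t (u' t i)) by (intros; apply is_derive_Reals; auto).
  assert (Cu' : forall i, cont (fun t => u' t i)).
  { intros i x. apply (proj1 (continuity_pt_filterlim _ _)). apply Hcont. }
  assert (Cu : forall i, cont (fun t => u t i)).
  { intros i x. apply (@ex_derive_continuous R_AbsRing R_NormedModule). exists (u' x i). apply Hd. }
  assert (Cmv : forall (M : mat N) i, cont (fun t => mv M (u t) i)).
  { intros M i. apply (cont_ext (fun t => lsum (IN N) (fun k => M i k * u t k))). intros; reflexivity.
    apply cont_lsum. intros k. apply cont_scal. apply Cu. }
  set (g := fun i t => b * u' t i - mv A0 (u t) i).
  assert (Cg : forall i, cont (g i)).
  { intros i. unfold g. apply cont_minus. apply cont_scal. apply Cu'. apply Cmv. }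
  assert (gE : forall i t, g i t = mu * f0 (u t) i) by (intros; unfold g; rewrite Hode; ring).
  assert (Hdc : forall i j, Cc j (fun t => u' t i) = INR j * Sc j (fun t => u t i) /\
                            Sc j (fun t => u' t i) = - INR j * Cc j (fun t => u t i)).
  { intros i j. apply (deriv_coef (fun t => u t i) (fun t => u' t i) j (Hd i) (Cu' i) (fun t => Hper t i)). }
  assert (CgE : forall i j, Cc j (g i) = b * (INR j * Sc j (fun t => u t i)) - mv A0 (fun k => Cc j (fun t => u t k)) i).
  { intros i j. unfold g. rewrite (Cc_ext j _ (fun t => b * u' t i + (-1) * mv A0 (u t) i)) by (intros; ring).
    rewrite Cc_lin2 by auto. rewrite Cc_mv by auto. rewrite (proj1 (Hdc i j)). ring. }
  assert (SgE : forall i j, Sc j (g i) = b * (- INR j * Cc j (fun t => u t i)) - mv A0 (fun k => Sc j (fun t => u t k)) i).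
  { intros i j. unfold g. rewrite (Sc_ext j _ (fun t => b * u' t i + (-1) * mv A0 (u t) i)) by (intros; ring).
    rewrite Sc_lin2 by auto. rewrite Sc_mv by auto. rewrite (proj2 (Hdc i j)). ring. }
  set (x0 := fun i => Cc 0 (fun t => u t i)).
  set (xv := fun j => ((fun i => Cc j (fun t => u t i)), (fun i => - Sc j (fun t => u t i))) : cvec N).
  set (G0 := fun i => Cc 0 (g i)).
  set (Gv := fun j => ((fun i => Cc j (g i)), (fun i => - Sc j (g i))) : cvec N).
  assert (CA : vnorm x0 <= K 0%nat * vnorm G0).
  { eapply Rle_trans. apply HK0, Hfix. right. f_equal. apply vnorm_ext. intros i.
    unfold G0, x0. rewrite CgE. simpl INR. ring. }
  assert (CB : forall j, (1 <= j)%nat -> cnorm (xv j) <= K j * cnorm (Gv j)).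
  { intros j Hj. eapply Rle_trans. apply (HKl j Hj). apply Htw; auto. right. f_equal. apply cnorm_ext. intros i.
    unfold Delta_c, xv, Gv. simpl. rewrite CgE, SgE, mv_opp. split; ring. }
  assert (CC : forall n, vnorm G0 ^ 2 + 2 * lsum (List.seq 1 n) (fun j => cnorm (Gv j) ^ 2) <= (Nfa * s) ^ 2).
  { intros n.
    rewrite vnorm_sq.
    rewrite (lsum_ext _ _ (fun j => lsum (IN N) (fun i => Cc j (g i) ^ 2 + Sc j (g i) ^ 2))).
    2: { intros j _. rewrite cnorm_sq. apply lsum_ext. intros; unfold Gv; simpl; ring. }
    rewrite lsum_swap, <- lsum_scal, <- lsum_plus.
    eapply Rle_trans. apply lsum_le. intros i _.
    apply (bessel (g i) (List.seq 1 n) (Cg i) (List.seq_NoDup n 1)). rewrite List.in_seq. lia.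
    assert (E : lsum (IN N) (fun i => / (2*PI) * RI (fun t => g i t ^ 2) 0 (2*PI)) =
                / (2*PI) * RI (fun t => lsum (IN N) (fun i => g i t ^ 2)) 0 (2*PI)).
    { rewrite lsum_scal. f_equal. symmetry. apply (RI_lsum (IN N) (fun i t => g i t ^ 2)).
      intros i. apply cont_pow. apply Cg. }
    rewrite E.
    assert (Hpt : forall t, lsum (IN N) (fun i => g i t ^ 2) <= (Nfa * s) ^ 2).
    { intros t.
      assert (Hut : vnorm (u t) <= s). { apply (proj1 Hlub). exists t; reflexivity. }
      assert (Hft : vnorm (f0 (u t)) <= Nfa * s).
      { eapply Rle_trans. apply Hf. lra. apply Rmult_le_compat_l; auto. apply Rmax_lub; lra. }
      rewrite (lsum_ext _ _ (fun i => mu ^ 2 * f0 (u t) i ^ 2)) by (intros; rewrite gE; ring).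
      rewrite lsum_scal, <- vnorm_sq.
      pose proof (vnorm_ge0 N (f0 (u t))).
      assert (mu ^ 2 <= 1) by nra.
      assert (vnorm (f0 (u t)) ^ 2 <= (Nfa * s) ^ 2) by (apply pow_incr; lra).
      assert (0 <= vnorm (f0 (u t)) ^ 2) by apply pow2_ge_0.
      nra. }
    apply Rle_trans with (/ (2*PI) * RI (fun _ => (Nfa * s) ^ 2) 0 (2*PI)).
    apply Rmult_le_compat_l. left; apply Rinv_0_lt_compat; lra.
    apply RI_le. lra. apply cont_lsum. intros i; apply cont_pow, Cg. apply cont_const.
    intros; apply Hpt.
    rewrite RI_const. right. field. lra. }
  set (Bnd := sqrt 2 * sqrt Ssum * (Nfa * s)).
  assert (CD : forall n, vnorm x0 + 2 * lsum (List.seq 1 n) (fun j => cnorm (xv j)) <= Bnd).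
  { intros n.
    apply Rle_trans with (K 0%nat * vnorm G0 + 2 * lsum (List.seq 1 n) (fun j => K j * cnorm (Gv j))).
    { apply Rplus_le_compat. auto. apply Rmult_le_compat_l. lra. apply lsum_le. intros j Hj.
      apply CB. apply List.in_seq in Hj. lia. }
    set (W := fun j => if Nat.eqb j 0 then vnorm G0 else 2 * cnorm (Gv j)).
    assert (E : K 0%nat * vnorm G0 + 2 * lsum (List.seq 1 n) (fun j => K j * cnorm (Gv j)) =
                lsum (List.seq 0 (S n)) (fun j => K j * W j)).
    { change (List.seq 0 (S n)) with (0%nat :: List.seq 1 n). rewrite lsum_cons. unfold W at 1. simpl Nat.eqb.
      f_equal. rewrite <- lsum_scal. apply lsum_ext. intros j Hj.
      apply List.in_seq in Hj. assert (Nat.eqb j 0 = false) by (apply Nat.eqb_neq; lia). unfold W. rewrite H. ring. }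
    rewrite E. eapply Rle_trans. apply Rle_abs. eapply Rle_trans. apply lsum_CS.
    assert (HK2 : lsum (List.seq 0 (S n)) (fun j => K j ^ 2) <= Ssum).
    { rewrite lsum_seq_sum. apply (partial_le_sum (fun j => K j ^ 2)). intros; apply pow2_ge_0. exact HS. }
    assert (HW2 : lsum (List.seq 0 (S n)) (fun j => W j ^ 2) <= 2 * (Nfa * s) ^ 2).
    { change (List.seq 0 (S n)) with (0%nat :: List.seq 1 n). rewrite lsum_cons. unfold W at 1. simpl Nat.eqb.
      rewrite (lsum_ext _ _ (fun j => 4 * cnorm (Gv j) ^ 2)).
      rewrite lsum_scal. specialize (CC n). pose proof (pow2_ge_0 (vnorm G0)). lra.
      intros j Hj. apply List.in_seq in Hj. assert (Nat.eqb j 0 = false) by (apply Nat.eqb_neq; lia). unfold W. rewrite H. ring. }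
    unfold Bnd. rewrite (Rmult_comm (sqrt 2)), Rmult_assoc. apply Rmult_le_compat.
    apply sqrt_pos. apply sqrt_pos. apply sqrt_le_1_alt; auto.
    replace (sqrt 2 * (Nfa * s)) with (sqrt (2 * (Nfa * s) ^ 2)).
    apply sqrt_le_1_alt; auto.
    rewrite sqrt_mult, sqrt_pow2; auto. nra. lra. apply pow2_ge_0. }
  assert (HBnd : 0 <= Bnd). { unfold Bnd. apply Rmult_le_pos. apply Rmult_le_pos; apply sqrt_pos. nra. }
  assert (CE : forall t0, vnorm (u t0) <= Bnd).
  { intros t0. set (e := u t0).
    set (phi := fun t => lsum (IN N) (fun i => e i * u t i)).
    assert (Cphi : cont phi). { unfold phi. apply cont_lsum. intros i. apply cont_scal, Cu. }
    assert (Pphi : forall t, phi (t + 2*PI) = phi t). { intros t. unfold phi. apply lsum_ext. intros; rewrite Hper; auto. }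
    assert (Hsup : Rabs (phi t0) <= vnorm e * Bnd).
    { apply sup_by_Tn; auto. intros n th. eapply Rle_trans. apply Tn_bound. auto.
      apply Rmult_le_compat_l. apply vnorm_ge0. apply CD. }
    assert (Ephi : phi t0 = vnorm e ^ 2). { rewrite vnorm_sq. unfold phi, e. apply lsum_ext; intros; ring. }
    rewrite Ephi in Hsup. rewrite Rabs_right in Hsup by (apply Rle_ge, pow2_ge_0).
    pose proof (vnorm_ge0 N e). fold e. nra. }
  assert (Hs_le : s <= Bnd).
  { apply (proj2 Hlub). intros y [t ->]. apply CE. }
  assert (Hsq : sqrt 2 <= sqrt (2 * PI)). { apply sqrt_le_1_alt. pose proof PI2_1. lra. }
  assert (Hlt : Nfa * (sqrt 2 * sqrt Ssum) < 1).
  { eapply Rle_lt_trans; [|exact HN]. apply Rmult_le_compat_l; auto. apply Rmult_le_compat_r. apply sqrt_pos. auto. }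
  assert (Bnd < s). { unfold Bnd. replace (sqrt 2 * sqrt Ssum * (Nfa * s)) with ((Nfa * (sqrt 2 * sqrt Ssum)) * s) by ring.
    assert (0 < s) by lra. nra. }
  lra.
Qed.

Lemma closure_in am ap (D : R -> R -> Prop) a b : (forall a b, D a b -> am <= a <= ap /\ 0 <= b) ->
  closure2 D a b -> am <= a <= ap.
Proof.
  intros Hsub Hcl. split.
  - apply Rnot_lt_le. intros Hlt. destruct (Hcl (am - a)) as [a' [b' [HD Hd]]]. lra.
    destruct (Hsub a' b' HD) as [[H1 H2] _]. unfold dist2 in Hd. simpl in Hd.
    assert (0 <= (b - b') ^ 2) by apply pow2_ge_0. nra.
  - apply Rnot_lt_le. intros Hlt. destruct (Hcl (a - ap)) as [a' [b' [HD Hd]]]. lra.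
    destruct (Hsub a' b' HD) as [[H1 H2] _]. unfold dist2 in Hd. simpl in Hd.
    assert (0 <= (b - b') ^ 2) by apply pow2_ge_0. nra.
Qed.

Lemma cont_of_der N (u u' : R -> vec N) : (forall i t, derivable_pt_lim (fun t0 => u t0 i) t (u' t i)) ->
  forall i, cont (fun t => u t i).
Proof. intros Hd i x. apply (@ex_derive_continuous R_AbsRing R_NormedModule). exists (u' x i).
  apply is_derive_Reals. apply Hd. Qed.

From mathcomp Require Import all_boot all_fingroup.

Theorem lemma1
  (gT : finGroupType) (N : nat) (rho : gT -> mat N)
  (H : {group gT}) (phi : gT -> R)
  (am ap : R) (A : R -> mat N) (f : R -> vec N -> vec N)
  (D : R -> R -> Prop) (Nf : R -> R) (r Rb : R)
  (* setting *)
  (Hrho : orth_rep rho)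
  (Hphi : twist_hom H phi)
  (Hint : am < ap)
  (HAeq : forall a, am <= a <= ap -> forall g : gT,
            mm (A a) (rho g) = mm (rho g) (A a))
  (Hfeq : forall a, am <= a <= ap -> forall (g : gT) (x : vec N),
            f a (mv (rho g) x) = mv (rho g) (f a x))
  (* (P0) *)
  (HP0A : forall i j a, am <= a <= ap -> forall eps, 0 < eps -> exists delta, 0 < delta /\
            forall a', am <= a' <= ap -> Rabs (a' - a) < delta ->
              Rabs (A a' i j - A a i j) < eps)
  (HP0f : forall a x, am <= a <= ap -> forall eps, 0 < eps -> exists delta, 0 < delta /\
            forall a' x', am <= a' <= ap -> Rabs (a' - a) < delta ->
              vnorm (vsub x' x) < delta -> vnorm (vsub (f a' x') (f a x)) < eps)
  (* (P1) *)
  (HP1 : forall a, am <= a <= ap -> Lambda0_nonzero rho H (A a))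
  (* (P3) *)
  (HP3sub : forall a b, D a b -> am <= a <= ap /\ 0 <= b)
  (HP3open : forall a b, D a b -> exists eps, 0 < eps /\
               forall a' b', am <= a' <= ap -> 0 <= b' ->
                 dist2 (a, b) (a', b') < eps ^ 2 -> D a' b')
  (HP3disk : homeomorphic2 (fun p => closure2 D (fst p) (snd p)) closed_disk)
  (HP3pos : forall a b, closure2 D a b -> 0 < b)
  (HP3iii : forall a b, boundary2 D a b ->
              forall l : nat, (1 <= l)%nat -> Lambda_nonzero rho H phi (A a) l b)
  (* (P4) *)
  (HP4N : forall a, am <= a <= ap -> 0 <= Nf a)
  (HP4r : 0 <= r) (HP4rR : r < Rb)
  (HP4 : forall a, am <= a <= ap -> forall x : vec N, vnorm x <= Rb ->
           vnorm (f a x) <= Nf a * Rmax r (vnorm x))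
  (* (P5): N(alpha) < 1/(sqrt(2 pi) M(alpha,beta)), with
     M^2 = sum_{l>=0} |Delta_l(alpha,0,beta)^{-1}|^2 *)
  (HP5 : forall a b, boundary2 D a b ->
           exists K : nat -> R,
             inv_opnorm (@vnorm N) (fixH rho H)
               (fun v i => - mv (A a) v i) (K 0%nat) /\
             (forall l : nat, (1 <= l)%nat ->
                inv_opnorm (@cnorm N) (twisted_space rho H phi l)
                  (Delta_c (A a) l b) (K l)) /\
             exists S : R, infinite_sum (fun l => K l ^ 2) S /\
               Nf a * (sqrt (2 * PI) * sqrt S) < 1)
  (* the point, mu and s *)
  (a b mu s : R)
  (Hab : boundary2 D a b)
  (Hmu : 0 <= mu <= 1)
  (Hs : r < s < Rb) :
  ~ exists (u u' : R -> vec N),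
      (* u is C^1 with derivative u' *)
      (forall i t, derivable_pt_lim (fun t0 => u t0 i) t (u' t i)) /\
      (forall i t, continuity_pt (fun t0 => u' t0 i) t) /\
      (* 2 pi-periodic *)
      (forall t i, u (t + 2 * PI) i = u t i) /\
      (* symmetry at least H^phi *)
      (forall h : gT, h \in H -> forall t i,
         mv (rho h) (u (t - 2 * PI * phi h)) i = u t i) /\
      (* ||u||_C = s *)
      is_lub (fun x => exists t, x = vnorm (u t)) s /\
      (* beta u' = A(alpha) u + mu f(alpha, u) *)
      (forall t i, b * u' t i = mv (A a) (u t) i + mu * f a (u t) i).
Proof.
  intros [u [u' [Hder [Hcont [Hper [Hsym [Hlub Hode]]]]]]].
  assert (Ha : am <= a <= ap).
  { apply (closure_in am ap D a b HP3sub). exact (proj1 Hab). }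
  destruct (HP5 a b Hab) as [K [HK0 [HKl [S [HS HN]]]]].
  assert (Cu := cont_of_der N u u' Hder).
  apply (core N (A a) (f a) (Nf a) r Rb b mu s S K (fixH rho H) (twisted_space rho H phi) u u').
  - intros v Hv. exact (proj1 (proj2 HK0) v Hv).
  - intros l Hl v Hv.
    assert (Hl' : (1 <= l)%N). { apply/leP. exact Hl. }
    exact (proj1 (proj2 (HKl l Hl')) v Hv).
  - intros l. destruct l as [|l].
    + exact (proj1 HK0).
    + exact (proj1 (HKl l.+1 isT)).
  - exact HS.
  - exact HN.
  - exact (HP4N a Ha).
  - exact HP4r.
  - exact (proj1 Hs).
  - exact (proj2 Hs).
  - exact Hmu.
  - intros x Hx. exact (HP4 a Ha x Hx).
  - exact Hder.
  - exact Hcont.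
  - exact Hper.
  - intros h Hh. exact (fix_of_sym N (rho h) (phi h) u Cu Hper (Hsym h Hh)).
  - intros l Hl h Hh. exact (tw_of_sym N (rho h) (phi h) u l Cu Hper (Hsym h Hh)).
  - exact Hlub.
  - exact Hode.
Qed.
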